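(* Let $0\le k,l\le N$ be integers and $a,b,c,d,q$ generic. Then $$R_k^l(a,b,c,d;N;q)=\sum_{P}\ \prod_{\text{early right}}\frac{(1-q^{x+2y}ad)(1-q^{x}a/d)}{(1-q^{x+y}cd)(1-q^{x-y}c/d)}\prod_{\text{early up}}\frac{(1-q^{2x+y}ac)(1-q^{y}a/c)}{(1-q^{x+y}cd)(1-q^{y-x}d/c)}$$ $$\times\prod_{\text{late right}}\frac{(1-q^{x+2y-k}bd)(1-q^{x-k}b/d)}{(1-q^{x+y}cd)(1-q^{x-y}c/d)}\prod_{\text{late up}}\frac{(1-q^{2x+y-k}bc)(1-q^{y-k}b/c)}{(1-q^{x+y}cd)(1-q^{y-x}d/c)},$$ where the sum is over all lattice paths $P$ from $(0,0)$ to $(l,N-l)$ with unit steps right $(1,0)$ or up $(0,1)$; the products run over the steps of $P$, the first $k$ steps being called ''early'' and the remaining $N-k$ ''late''; and in each factor $(x,y)$ is the starting point of the corresponding step.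
   Context: $h_k(x;a)=\prod_{j=0}^{k-1}(1-axq^j+a^2q^{2j})$. For generic parameters, $R_k^l(a,b,c,d;N;q)$ are the unique coefficients with $h_k(x;a)h_{N-k}(x;b)=\sum_{l=0}^N R_k^l(a,b,c,d;N;q)\,h_l(x;c)h_{N-l}(x;d)$ as polynomials in $x$. *)

(* Defs.v *)
From HB Require Import structures.
From mathcomp Require Import all_boot all_order all_algebra.
Set Implicit Arguments. Unset Strict Implicit. Unset Printing Implicit Defensive.
Import Order.TTheory GRing.Theory Num.Theory.
Local Open Scope ring_scope.

Section Defs.
Variable F : fieldType.

Definition hpoly (q a : F) (k : nat) : {poly F} :=
  \prod_(j < k) (1 - (a * q ^+ j) *: 'X + (a ^+ 2 * q ^+ (2 * j))%:P).

Definition expansion (q c d : F) (N : nat) (r : nat -> F) : {poly F} :=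
  \sum_(l < N.+1) r l *: (hpoly q c l * hpoly q d (N - l)).

Definition is_R_coeffs (q a b c d : F) (k N : nat) (r : nat -> F) : Prop :=
  hpoly q a k * hpoly q b (N - k) = expansion q c d N r.

(* A lattice path from (0,0) with N unit steps is a N-tuple of booleans:
   true = right step (1,0), false = up step (0,1).  It ends at (l, N-l) iff it has exactly l right steps. *)
Definition step_x (N : nat) (p : N.-tuple bool) (i : nat) : nat :=
  count id (take i p).
Definition step_y (N : nat) (p : N.-tuple bool) (i : nat) : nat :=
  i - step_x p i.

Definition qz (q : F) (z : int) : F := q ^ z.

Definition step_weight (q a b c d : F) (k : nat) (early right : bool)
    (x y : nat) : F :=
  let X : int := x%:Z in let Y : int := y%:Z in let K : int := k%:Z in
  if right then
    (if early then
       (1 - qz q (X + 2%:Z * Y) * a * d) * (1 - qz q X * a / d)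
     else
       (1 - qz q (X + 2%:Z * Y - K) * b * d) * (1 - qz q (X - K) * b / d))
    / ((1 - qz q (X + Y) * c * d) * (1 - qz q (X - Y) * c / d))
  else
    (if early then
       (1 - qz q (2%:Z * X + Y) * a * c) * (1 - qz q Y * a / c)
     else
       (1 - qz q (2%:Z * X + Y - K) * b * c) * (1 - qz q (Y - K) * b / c))
    / ((1 - qz q (X + Y) * c * d) * (1 - qz q (Y - X) * d / c)).

Definition path_weight (q a b c d : F) (k N : nat) (p : N.-tuple bool) : F :=
  \prod_(i < N) step_weight q a b c d k (i < k)%N (tnth p i)
                  (step_x p i) (step_y p i).

Definition path_sum (q a b c d : F) (k N l : nat) : F :=
  \sum_(p : N.-tuple bool | count id p == l) path_weight q a b c d k p.

End Defs.

(* Main.v *)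
Set Warnings "-notation-overridden,-ambiguous-paths".
Require Import Defs.
From HB Require Import structures.
From mathcomp Require Import all_boot all_order all_algebra.
From mathcomp Require Import ring.
Import Order.TTheory GRing.Theory Num.Theory.
Local Open Scope ring_scope.
Set Implicit Arguments. Unset Strict Implicit.

Definition fac (F : fieldType) (q u : F) (i : nat) : {poly F} :=
  1 - (u * q ^+ i) *: 'X + (u ^+ 2 * q ^+ (2 * i))%:P.

Definition wgtQ (F : fieldType) (Q P e c d : F) (r : bool) : F :=
  if r then (1 - Q * P ^+ 2 * e * d) * (1 - Q * e / d)
            / ((1 - Q * P * c * d) * (1 - Q / P * c / d))
  else (1 - Q ^+ 2 * P * e * c) * (1 - P * e / c)
            / ((1 - Q * P * c * d) * (1 - P / Q * d / c)).

Definition wgt (F : fieldType) (q e c d : F) (r : bool) (x y : nat) : F :=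
  wgtQ (q ^+ x) (q ^+ y) e c d r.

Definition ee (F : fieldType) (q a b : F) (k i : nat) : F :=
  if (i < k)%N then a else b / q ^+ k.

Definition dok (F : fieldType) (q c d : F) (x y : nat) :=
  [/\ 1 - q ^+ x * q ^+ y * c * d != 0, 1 - q ^+ x / q ^+ y * c / d != 0
    & 1 - q ^+ y / q ^+ x * d / c != 0].

Lemma core (F : fieldType) (Q P e c d : F) : Q != 0 -> P != 0 -> c != 0 -> d != 0 ->
  1 - Q*P*c*d != 0 -> 1 - Q/P*c/d != 0 -> 1 - P/Q*d/c != 0 ->
  e*(Q*P) = wgtQ Q P e c d true*(c*Q) + wgtQ Q P e c d false*(d*P) /\
  e^+2*(Q^+2*P^+2) = wgtQ Q P e c d true + wgtQ Q P e c d false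
     + wgtQ Q P e c d true*(c^+2*Q^+2) + wgtQ Q P e c d false*(d^+2*P^+2) - 1.
Proof.
move=> hQ hP hc hd h1 h2 h3; rewrite /wgtQ.
have h4 : P*d - Q*c != 0.
  move: h2; rewrite (_ : 1 - Q/P*c/d = (P*d - Q*c)/(P*d)); last by field; rewrite ?hP ?hd.
  by rewrite mulf_eq0 negb_or => /andP[].
have h5 : Q*c - P*d != 0 by rewrite -opprB oppr_eq0.
split; field.
all: by rewrite h4 h5 h1 hc hd hQ hP.
Qed.

Lemma fac_step (F : fieldType) (q e c d : F) (x y : nat) : q != 0 -> c != 0 -> d != 0 ->
  dok q c d x y ->
  fac q e (x + y) = (wgt q e c d true x y)%:P * fac q c x
                    + (wgt q e c d false x y)%:P * fac q d y.
Proof.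
move=> hq hc hd [h1 h2 h3].
have [E1 E2] := @core F (q^+x) (q^+y) e c d (expf_neq0 _ hq) (expf_neq0 _ hq) hc hd h1 h2 h3.
rewrite /fac /wgt.
rewrite mulnDr !(mulnC 2%N) (exprD q x y) (exprD q (x*2) (y*2)) !exprM -!mul_polyC E1 E2.
rewrite !(rmorphD, rmorphB, rmorphM, rmorph1).
ring.
Qed.

Lemma hpolyS (F : fieldType) (q u : F) n : hpoly q u n.+1 = hpoly q u n * fac q u n.
Proof. by rewrite /hpoly big_ord_recr. Qed.

Lemma one_step (F : fieldType) (q e c d : F) (x y : nat) : q != 0 -> c != 0 -> d != 0 ->
  dok q c d x y ->
  hpoly q c x * hpoly q d y * fac q e (x + y) =
    wgt q e c d true x y *: (hpoly q c x.+1 * hpoly q d y)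
    + wgt q e c d false x y *: (hpoly q c x * hpoly q d y.+1).
Proof.
move=> hq hc hd hD; rewrite !hpolyS (fac_step e hq hc hd hD) -!mul_polyC; ring.
Qed.

Lemma qzP (F : fieldType) (q : F) (m : nat) : qz q (m%:Z) = q ^+ m.
Proof. by rewrite /qz -exprnP. Qed.

Lemma qzB (F : fieldType) (q : F) (m n : nat) : q != 0 -> qz q (m%:Z - n%:Z) = q ^+ m / q ^+ n.
Proof. by move=> hq; rewrite /qz expfzDr // -exprnN -exprnP. Qed.

Lemma qzD (F : fieldType) (q : F) (m n : nat) : qz q (m%:Z + n%:Z) = q ^+ m * q ^+ n.
Proof. by rewrite -PoszD qzP exprD. Qed.

Lemma sw_eq (F : fieldType) (q a b c d : F) (k i : nat) (r : bool) (x y : nat) :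
  q != 0 ->
  step_weight q a b c d k (i < k)%N r x y = wgt q (ee q a b k i) c d r x y.
Proof.
move=> hq; rewrite /step_weight /wgt /wgtQ /ee /=.
rewrite -!PoszM -!PoszD !qzB // !qzP !(mulnC 2%N) (exprD q x (y*2)) (exprD q (x*2) y)
  (exprD q x y) !exprM.
by case: r; case: (i < k)%N => //; congr (_ / _); ring.
Qed.

Lemma pw_rcons (F : fieldType) (q a b c d : F) (k n : nat) (p : n.-tuple bool) (r : bool) :
  path_weight q a b c d k [tuple of rcons p r] =
  path_weight q a b c d k p *
    step_weight q a b c d k (n < k)%N r (count id p) (n - count id p).
Proof.
rewrite /path_weight big_ord_recr /=; congr (_ * _).
  apply: eq_bigr => i _.
  have Ht : tnth [tuple of rcons p r] (widen_ord (leqnSn n) i) = tnth p i.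
    by rewrite !(tnth_nth false) /= nth_rcons size_tuple ltn_ord.
  have Hx : step_x [tuple of rcons p r] (widen_ord (leqnSn n) i) = step_x p i.
    by rewrite /step_x /= -cats1 takel_cat // size_tuple ltnW.
  by rewrite Ht /step_y Hx.
have Ht : tnth [tuple of rcons p r] ord_max = r.
  by rewrite (tnth_nth false) /= nth_rcons size_tuple ltnn eqxx.
have Hx : step_x [tuple of rcons p r] n = count id p.
  by rewrite /step_x /= -cats1 takel_cat ?size_tuple // take_oversize // size_tuple.
by rewrite Ht /step_y Hx.
Qed.

Lemma rcons_bij (n : nat) :
  bijective (fun u : bool * n.-tuple bool => [tuple of rcons u.2 u.1]).
Proof.
exists (fun t : n.+1.-tuple bool =>
          (last false t, ([tuple of belast (thead t) (behead t)] : n.-tuple bool))).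
  move=> [r p] /=.
  set t := [tuple of rcons p r].
  have E : rcons p r = thead t :: behead t by exact: (congr1 val (tuple_eta t)).
  have := lastI (thead t) (behead t); rewrite -E => /rcons_inj [E1 E2].
  rewrite last_rcons; congr pair; apply: val_inj => /=; by rewrite -E1.
move=> t; apply: val_inj => /=.
have E : val t = thead t :: behead t by exact: (congr1 val (tuple_eta t)).
by rewrite E /= -lastI.
Qed.

Lemma Gmain (F : fieldType) (q a b c d : F) (k n : nat) : q != 0 -> c != 0 -> d != 0 ->
  (forall x y, (x + y < n)%N -> dok q c d x y) ->
  \prod_(i < n) fac q (ee q a b k i) i =
  \sum_(p : n.-tuple bool) path_weight q a b c d k p *:
      (hpoly q c (count id p) * hpoly q d (n - count id p)).
Proof.
move=> hq hc hd; elim: n => [|n IH] hD.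
  rewrite big_ord0 (big_pred1 [tuple]); last by move=> t /=; apply/esym/eqP/tuple0.
  by rewrite /path_weight /hpoly !big_ord0 scale1r mulr1.
rewrite big_ord_recr /= IH; last by move=> x y h; apply: hD; exact: ltnW.
rewrite mulr_suml.
transitivity (\sum_(r : bool) \sum_(p : n.-tuple bool)
   path_weight q a b c d k [tuple of rcons p r] *:
     (hpoly q c (count id (rcons p r)) * hpoly q d (n.+1 - count id (rcons p r)))).
  rewrite big_bool /= -big_split /=; apply: eq_bigr => p _.
  have hx : (count id p <= n)%N by rewrite -{2}(size_tuple p) count_size.
  have Exy : (count id p + (n - count id p))%N = n by rewrite subnKC.
  have := one_step (ee q a b k n) hq hc hd (hD _ _ _ : dok q c d (count id p) (n - count id p)).
  rewrite Exy -scalerAl => ->.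
  rewrite scalerDr !scalerA !pw_rcons !sw_eq // -!cats1 !count_cat /= addn0 addn1 subSS subSn ?addn0 // !addn0.
  exact: ltnSn.
rewrite (pair_bigA _ (fun (r : bool) (p : n.-tuple bool) =>
   path_weight q a b c d k [tuple of rcons p r] *:
     (hpoly q c (count id (rcons p r)) * hpoly q d (n.+1 - count id (rcons p r))))).
rewrite (reindex _ (onW_bij _ (rcons_bij n))) /=.
by apply: eq_bigr => -[r p] _.
Qed.

Lemma hsplit (F : fieldType) (q a b : F) (k N : nat) : q != 0 -> (k <= N)%N ->
  hpoly q a k * hpoly q b (N - k) = \prod_(i < N) fac q (ee q a b k i) i.
Proof.
move=> hq hk.
rewrite -(big_mkord xpredT (fun i => fac q (ee q a b k i) i)) (big_cat_nat (leq0n k) hk) /=.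
congr (_ * _).
  rewrite /hpoly big_mkord; apply: eq_bigr => i _.
  by rewrite /ee ltn_ord.
have := @big_addn _ 1 *%R 0 N k xpredT (fun i => fac q (ee q a b k i) i).
rewrite add0n => ->; rewrite /hpoly big_mkord; apply: eq_bigr => j _.
have hqk : q ^+ k != 0 by exact: expf_neq0.
rewrite /ee ltnNge leq_addl /= /fac; congr (_ - _ *: _ + _%:P).
  by rewrite exprD; field.
by rewrite mulnDr !(mulnC 2%N) (exprD q (j*2) (k*2)) !exprM; field.
Qed.

Theorem mainTheorem10 (F : fieldType) (q a b c d : F) (k l N : nat)
    (hk : (k <= N)%N) (hl : (l <= N)%N)
    (hq : q != 0) (hc : c != 0) (hd : d != 0)
    (hden : forall x y : nat, (x + y < N)%N ->
       [/\ 1 - qz q (x%:Z + y%:Z) * c * d != 0,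
           1 - qz q (x%:Z - y%:Z) * c / d != 0 &
           1 - qz q (y%:Z - x%:Z) * d / c != 0])
    (hind : forall r : nat -> F, expansion q c d N r = 0 ->
       forall j, (j <= N)%N -> r j = 0) :
  is_R_coeffs q a b c d k N (path_sum q a b c d k N) /\
  (forall r : nat -> F, is_R_coeffs q a b c d k N r ->
    r l = path_sum q a b c d k N l).
Proof.
have hD : forall x y, (x + y < N)%N -> dok q c d x y.
  by move=> x y /hden; rewrite qzD !qzB.
have part1 : is_R_coeffs q a b c d k N (path_sum q a b c d k N).
  rewrite /is_R_coeffs hsplit // (Gmain a b k hq hc hd hD) /expansion /path_sum.
  rewrite (partition_big (fun p : N.-tuple bool => (inord (count id p) : 'I_N.+1)) xpredT) //=.
  apply: eq_bigr => j _; rewrite scaler_suml; apply: eq_big => p.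
    have hp : (count id p <= N)%N by rewrite -{2}(size_tuple p) count_size.
    by rewrite -val_eqE /= inordK.
  have hp : (count id p <= N)%N by rewrite -{2}(size_tuple p) count_size.
  by rewrite -val_eqE /= inordK // => /eqP ->.
split=> // r hr.
have E : expansion q c d N (fun l => r l - path_sum q a b c d k N l) = 0.
  rewrite /expansion; under eq_bigr do rewrite scalerBl.
  by rewrite sumrB -/(expansion q c d N r) -/(expansion q c d N (path_sum q a b c d k N)) -hr -part1 subrr.
by apply/eqP; rewrite -subr_eq0; apply/eqP; exact: hind E l hl.
Qed.
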